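(* Let $\tau,r,s,c_1$ be positive reals and $C_-\le C_+$, $C'_-\le C'_+$ real numbers, and let $x_0=\max\{e^{C'_+}s,\ e^{C_+}r\}$. For $x>x_0$ consider the inequality $$(\ast)\qquad \log^\tau\!\Big(\frac xr\Big)\frac{\left(1-\frac{C_+}{\log(x/r)}\right)^{\tau+1}}{1-\frac{C_-}{\log(x/r)}}\ge c_1\log^\tau\!\Big(\frac xs\Big)\frac{\left(1-\frac{C'_-}{\log(x/s)}\right)^{\tau+1}}{1-\frac{C'_+}{\log(x/s)}},$$ and put $$R(x)=\left[c_1\,\frac{1+\frac{C'_+-C'_-}{\log(x/s)-C'_+}}{1+\frac{C_--C_+}{\log(x/r)-C_-}}\right]^{1/\tau}.$$ (i) If $\log s+C'_-\le C_++\log r$ and $(\ast)$ holds for some $x_1>x_0$, then $(\ast)$ holds for every $x\ge x_1$. (ii) If $\log s+C'_->C_++\log r$ and $R(x_1)\le1$ for some $x_1>x_0$, then $(\ast)$ holds for every $x\ge x_1$. *)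

(* Defs.v *)
From Stdlib Require Import Reals.
Open Scope R_scope.

(* One side of the inequality [star], as a function of L = log(x/q):
     L^t * (1 - Ca/L)^(t+1) / (1 - Cb/L).
   For L > 0 this is literally the paper's expression (real powers of
   positive bases).  For L <= 0 (possible only when Ca < 0, since x > x0
   forces L > Ca) the paper's real powers of non-positive bases have no
   meaning; we use the algebraically equal expression
   (L - Ca)^(t+1) / (L - Cb), which is what the expression equals for L > 0
   and which is well defined for every L > Ca >= Cb. *)
Definition side (L Ca Cb t : R) : R :=
  if Rlt_dec 0 L
  then Rpower L t * Rpower (1 - Ca / L) (t + 1) / (1 - Cb / L)
  else Rpower (L - Ca) (t + 1) / (L - Cb).

Definition ineq_star (tau r s c1 Cm Cp Cm' Cp' x : R) : Prop :=
  side (ln (x / r)) Cp Cm tau >= c1 * side (ln (x / s)) Cm' Cp' tau.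

Definition x0 (r s Cp Cp' : R) : R := Rmax (exp Cp' * s) (exp Cp * r).

Definition Rfun (tau r s c1 Cm Cp Cm' Cp' x : R) : R :=
  Rpower
    (c1 * (1 + (Cp' - Cm') / (ln (x / s) - Cp'))
        / (1 + (Cm - Cp) / (ln (x / r) - Cm)))
    (1 / tau).

(* Main.v *)
Require Import Defs.
From Stdlib Require Import Reals Lra.
Open Scope R_scope.

Lemma Rpower_pos x y : 0 < Rpower x y.
Proof. unfold Rpower; apply exp_pos. Qed.

Lemma Rpower_inv B c : 0 < B -> Rpower (/ B) c = / Rpower B c.
Proof.
  intro HB. unfold Rpower. rewrite ln_Rinv by lra.
  replace (c * - ln B) with (- (c * ln B)) by ring. apply exp_Ropp.
Qed.

Lemma Rpower_S A t : 0 < A -> Rpower A (t + 1) = Rpower A t * A.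
Proof. intro. rewrite Rpower_plus, Rpower_1; auto. Qed.

Lemma Rpower_div A B t : 0 < A -> 0 < B -> Rpower (A / B) t = Rpower A t / Rpower B t.
Proof.
  intros. unfold Rdiv. rewrite <- Rpower_mult_distr by (auto; apply Rinv_0_lt_compat; auto).
  rewrite Rpower_inv; auto.
Qed.

Lemma side_eq L Ca Cb t : Ca < L -> Cb < L ->
  side L Ca Cb t = Rpower (L - Ca) (t + 1) / (L - Cb).
Proof.
  intros H1 H2. unfold side. destruct (Rlt_dec 0 L) as [HL|HL]; [|reflexivity].
  replace (1 - Ca / L) with ((L - Ca) / L) by (field; lra).
  replace (1 - Cb / L) with ((L - Cb) / L) by (field; lra).
  rewrite Rpower_div by lra. rewrite (Rpower_S L) by lra.
  assert (0 < Rpower L t) by apply Rpower_pos.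
  field. lra.
Qed.

Lemma ratio A B V a c1 t : 0 < A -> 0 < B -> 0 < V -> 0 < A + a ->
  (Rpower A (t + 1) / (A + a) >= c1 * (Rpower B (t + 1) / V) <->
   Rpower (A / B) t * (A / (A + a)) * (V / B) >= c1).
Proof.
  intros HA HB HV Ha.
  assert (E : Rpower A (t + 1) / (A + a) =
     (Rpower (A / B) t * (A / (A + a)) * (V / B)) * (Rpower B (t + 1) / V)).
  { rewrite Rpower_div, !Rpower_S by lra.
    assert (0 < Rpower B t) by apply Rpower_pos. field. lra. }
  rewrite E.
  assert (HK : 0 < Rpower B (t + 1) / V).
  { apply Rdiv_lt_0_compat; [apply Rpower_pos | lra]. }
  set (K := Rpower B (t + 1) / V) in *.
  set (X := Rpower (A / B) t * (A / (A + a)) * (V / B)).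
  split; intro H.
  - apply Rle_ge. apply Rmult_le_reg_r with K; auto. lra.
  - apply Rle_ge. apply Rmult_le_compat_r; lra.
Qed.

Lemma ln_div' x r : 0 < x -> 0 < r -> ln (x / r) = ln x - ln r.
Proof. intros. unfold Rdiv. rewrite ln_mult, ln_Rinv; try lra. apply Rinv_0_lt_compat; auto. Qed.

Lemma ln_le' x y : 0 < x -> x <= y -> ln x <= ln y.
Proof. intros. destruct (Req_dec x y). subst; lra. left; apply ln_increasing; lra. Qed.

Section S.
Variables (tau r s c1 Cm Cp Cm' Cp' : R).
Hypotheses (Htau : 0 < tau) (Hr : 0 < r) (Hs : 0 < s) (Hc1 : 0 < c1)
  (HC : Cm <= Cp) (HC' : Cm' <= Cp').

Definition AA x := ln x - ln r - Cp.
Definition VV x := ln x - ln s - Cp'.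
Definition BB x := ln x - ln s - Cm'.
Definition GG x := Rpower (AA x / BB x) tau * (AA x / (AA x + (Cp - Cm))) * (VV x / BB x).

Lemma x0_facts x : x > x0 r s Cp Cp' -> 0 < x /\ 0 < AA x /\ 0 < VV x /\ 0 < BB x.
Proof.
  intro H. unfold x0 in H. apply Rmax_Rlt in H. destruct H as [H1 H2].
  assert (P1 : 0 < exp Cp' * s) by (apply Rmult_lt_0_compat; auto; apply exp_pos).
  assert (P2 : 0 < exp Cp * r) by (apply Rmult_lt_0_compat; auto; apply exp_pos).
  assert (0 < x) by lra.
  apply ln_increasing in H1; auto. apply ln_increasing in H2; auto.
  rewrite ln_mult, ln_exp in H1 by (auto; apply exp_pos).
  rewrite ln_mult, ln_exp in H2 by (auto; apply exp_pos).
  unfold AA, VV, BB. repeat split; try lra.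
Qed.

Lemma star_iff x : x > x0 r s Cp Cp' ->
  (ineq_star tau r s c1 Cm Cp Cm' Cp' x <-> GG x >= c1).
Proof.
  intro H. destruct (x0_facts x H) as (Hx & HA & HV & HB).
  unfold ineq_star. rewrite !ln_div' by auto.
  unfold AA, VV, BB in *.
  rewrite !side_eq by lra.
  replace (ln x - ln r - Cm) with ((ln x - ln r - Cp) + (Cp - Cm)) by ring.
  apply ratio; lra.
Qed.

Lemma frac_mono u1 u2 a : 0 <= a -> 0 < u1 -> u1 <= u2 -> u1 / (u1 + a) <= u2 / (u2 + a).
Proof.
  intros. apply Rmult_le_reg_r with ((u1 + a) * (u2 + a)). nra.
  field_simplify; try lra. nra.
Qed.

Lemma shift x1 x : x1 > x0 r s Cp Cp' -> x >= x1 ->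
  exists d, 0 <= d /\ AA x = AA x1 + d /\ VV x = VV x1 + d /\ BB x = BB x1 + d.
Proof.
  intros H1 H2. destruct (x0_facts x1 H1) as (Hx & _).
  exists (ln x - ln x1). assert (ln x1 <= ln x) by (apply ln_le'; lra).
  unfold AA, VV, BB. repeat split; lra.
Qed.

Lemma pos_prod3 p q w p' q' w' : 0 < p -> 0 < q -> 0 < w -> p <= p' -> q <= q' -> w <= w' ->
  p * q * w <= p' * q' * w'.
Proof.
  intros. apply Rmult_le_compat; try lra.
  - apply Rmult_le_pos; lra.
  - apply Rmult_le_compat; lra.
Qed.

End S.

Theorem lemma14 (tau r s c1 Cm Cp Cm' Cp' : R)
  (Htau : 0 < tau) (Hr : 0 < r) (Hs : 0 < s) (Hc1 : 0 < c1)
  (HC : Cm <= Cp) (HC' : Cm' <= Cp') :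
  ( ln s + Cm' <= Cp + ln r ->
    forall x1, x1 > x0 r s Cp Cp' ->
    ineq_star tau r s c1 Cm Cp Cm' Cp' x1 ->
    forall x, x >= x1 -> ineq_star tau r s c1 Cm Cp Cm' Cp' x )
  /\
  ( ln s + Cm' > Cp + ln r ->
    forall x1, x1 > x0 r s Cp Cp' ->
    Rfun tau r s c1 Cm Cp Cm' Cp' x1 <= 1 ->
    forall x, x >= x1 -> ineq_star tau r s c1 Cm Cp Cm' Cp' x ).
Proof.
  split.
  - intros He x1 Hx1 Hst x Hx.
    assert (Hx' : x > x0 r s Cp Cp') by lra.
    rewrite (star_iff tau r s c1 Cm Cp Cm' Cp' Hr Hs HC HC' x1 Hx1) in Hst.
    rewrite (star_iff tau r s c1 Cm Cp Cm' Cp' Hr Hs HC HC' x Hx').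
    destruct (x0_facts r s Cp Cm' Cp' Hr Hs HC' x1 Hx1) as (P1 & A1 & V1 & B1).
    destruct (shift r s Cp Cm' Cp' Hr Hs HC' x1 x Hx1 Hx) as (d & Hd & EA & EV & EB).
    unfold GG in *. rewrite EA, EV, EB.
    apply Rle_ge. eapply Rle_trans; [apply Rge_le; exact Hst|].
    apply pos_prod3.
    + apply Rpower_pos.
    + apply Rdiv_lt_0_compat; lra.
    + apply Rdiv_lt_0_compat; lra.
    + apply Rle_Rpower_l; [lra|]. split. apply Rdiv_lt_0_compat; lra.
      assert (BB s Cm' x1 = AA r Cp x1 + (Cp + ln r - ln s - Cm')) by (unfold AA, BB; ring).
      rewrite H. replace (AA r Cp x1 + (Cp + ln r - ln s - Cm') + d) with (AA r Cp x1 + d + (Cp + ln r - ln s - Cm')) by ring.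
      apply frac_mono; lra.
    + apply frac_mono; lra.
    + assert (BB s Cm' x1 = VV s Cp' x1 + (Cp' - Cm')) by (unfold VV, BB; ring).
      rewrite H. replace (VV s Cp' x1 + (Cp' - Cm') + d) with (VV s Cp' x1 + d + (Cp' - Cm')) by ring.
      apply frac_mono; lra.
  - intros He x1 Hx1 HR x Hx.
    assert (Hx' : x > x0 r s Cp Cp') by lra.
    rewrite (star_iff tau r s c1 Cm Cp Cm' Cp' Hr Hs HC HC' x Hx').
    destruct (x0_facts r s Cp Cm' Cp' Hr Hs HC' x1 Hx1) as (P1 & A1 & V1 & B1).
    destruct (x0_facts r s Cp Cm' Cp' Hr Hs HC' x Hx') as (P & A & V & B).
    destruct (shift r s Cp Cm' Cp' Hr Hs HC' x1 x Hx1 Hx) as (d & Hd & EA & EV & EB).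
    assert (Hc : c1 <= AA r Cp x1 / (AA r Cp x1 + (Cp - Cm)) * (VV s Cp' x1 / BB s Cm' x1)).
    { unfold Rfun in HR. rewrite !ln_div' in HR by auto.
      replace (ln x1 - ln s - Cp') with (VV s Cp' x1) in HR by (unfold VV; ring).
      replace (ln x1 - ln r - Cm) with (AA r Cp x1 + (Cp - Cm)) in HR by (unfold AA; ring).
      set (y := c1 * (1 + (Cp' - Cm') / VV s Cp' x1) / (1 + (Cm - Cp) / (AA r Cp x1 + (Cp - Cm)))) in HR.
      assert (Ey : y = c1 / (AA r Cp x1 / (AA r Cp x1 + (Cp - Cm)) * (VV s Cp' x1 / BB s Cm' x1))).
      { unfold y. replace (BB s Cm' x1) with (VV s Cp' x1 + (Cp' - Cm')) by (unfold VV, BB; ring).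
        field. repeat split; lra. }
      assert (Hq : 0 < AA r Cp x1 / (AA r Cp x1 + (Cp - Cm)) * (VV s Cp' x1 / BB s Cm' x1)).
      { apply Rmult_lt_0_compat; apply Rdiv_lt_0_compat; lra. }
      assert (Hy : y <= 1).
      { destruct (Rle_dec y 1) as [|Hn]; auto. exfalso.
        assert (1 < y) by lra.
        assert (0 < ln y) by (rewrite <- ln_1; apply ln_increasing; lra).
        assert (1 < Rpower y (1 / tau)).
        { unfold Rpower. assert (0 < 1 / tau) by (apply Rdiv_lt_0_compat; lra).
          assert (exp 0 < exp (1 / tau * ln y)) by (apply exp_increasing; apply Rmult_lt_0_compat; auto).
          rewrite exp_0 in *. lra. }
        lra. }
      rewrite Ey in Hy. apply Rmult_le_reg_r with (/ (AA r Cp x1 / (AA r Cp x1 + (Cp - Cm)) * (VV s Cp' x1 / BB s Cm' x1))).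
      apply Rinv_0_lt_compat; auto.
      rewrite Rinv_r by lra. unfold Rdiv in Hy. lra. }
    unfold GG.
    assert (H1 : 1 <= Rpower (AA r Cp x / BB s Cm' x) tau).
    { assert (E1 : Rpower 1 tau = 1) by (unfold Rpower; rewrite ln_1, Rmult_0_r; apply exp_0).
      rewrite <- E1. apply Rle_Rpower_l; [lra|]. split; [lra|].
      assert (BB s Cm' x < AA r Cp x) by (unfold AA, BB; lra).
      apply Rmult_le_reg_r with (BB s Cm' x); auto. unfold Rdiv. rewrite Rmult_assoc, Rinv_l; lra. }
    assert (Hm : AA r Cp x1 / (AA r Cp x1 + (Cp - Cm)) * (VV s Cp' x1 / BB s Cm' x1) <=
                 AA r Cp x / (AA r Cp x + (Cp - Cm)) * (VV s Cp' x / BB s Cm' x)).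
    { rewrite EA, EV, EB. apply Rmult_le_compat.
      - apply Rlt_le, Rdiv_lt_0_compat; lra.
      - apply Rlt_le, Rdiv_lt_0_compat; lra.
      - apply frac_mono; lra.
      - replace (BB s Cm' x1) with (VV s Cp' x1 + (Cp' - Cm')) by (unfold VV, BB; ring).
        replace (VV s Cp' x1 + (Cp' - Cm') + d) with (VV s Cp' x1 + d + (Cp' - Cm')) by ring.
        apply frac_mono; lra. }
    assert (Hq : 0 < AA r Cp x / (AA r Cp x + (Cp - Cm)) * (VV s Cp' x / BB s Cm' x)).
    { apply Rmult_lt_0_compat; apply Rdiv_lt_0_compat; lra. }
    rewrite Rmult_assoc. apply Rle_ge.
    apply Rle_trans with (1 * (AA r Cp x / (AA r Cp x + (Cp - Cm)) * (VV s Cp' x / BB s Cm' x))).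
    + lra.
    + apply Rmult_le_compat_r; lra.
Qed.
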